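(* Let $L:\mathbb{R}^d\to\mathbb{R}^{\mathcal{Y}}_+$ be a polyhedral loss, $\ell:\mathcal{R}\to\mathbb{R}^{\mathcal{Y}}_+$ a discrete loss, $\|\cdot\|$ a norm on $\mathbb{R}^d$, and $\psi:\mathbb{R}^d\to\mathcal{R}$ a link. Then $(L,\psi)$ is calibrated with respect to $\ell$ if and only if there exists $\epsilon>0$ such that $\psi$ is produced by the general $\epsilon$-thickened link construction for $L$, $\mathrm{prop}[\ell]$, $\epsilon$, $\|\cdot\|$.
   Context: $\mathcal{Y}$ is a finite label set, $\Delta_{\mathcal{Y}}$ the simplex, $\mathbb{R}^{\mathcal{Y}}_+$ the nonnegative orthant. A loss $L:\mathcal{R}\to\mathbb{R}^{\mathcal{Y}}_+$ is discrete if $\mathcal{R}$ is finite; $L:\mathbb{R}^d\to\mathbb{R}^{\mathcal{Y}}_+$ is polyhedral if each coordinate is a max of finitely many affine functions. For losses whose expected loss $\langle p,L(\cdot)\rangle$ attains its minimum for each $p$ (true for polyhedral and discrete losses), $\mathrm{prop}[L](p)=\arg\min_r\langle p,L(r)\rangle$, with level sets $\mathrm{prop}[L]_r=\{p:r\in\mathrm{prop}[L](p)\}$. $L$ indirectly elicits $\gamma$ if for all $u$ there is $r$ with $\mathrm{prop}[L]_u\subseteq\gamma_r$. Calibration: for all $p$, $\inf_{u:\psi(u)\notin\mathrm{prop}[\ell](p)}\langle p,L(u)\rangle>\inf_u\langle p,L(u)\rangle$. General $\epsilon$-thickened link construction for a polyhedral $L$, a finite property $\gamma:\Delta_{\mathcal{Y}}\rightrightarrows\mathcal{R}$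 indirectly elicited by $L$, $\epsilon>0$ and a norm $\|\cdot\|$: let $\Gamma=\mathrm{prop}[L]$, $\mathcal{U}=\{\Gamma(p):p\in\Delta_{\mathcal{Y}}\}$, $\Gamma_U=\{p:\Gamma(p)=U\}$ and $R_U=\{r\in\mathcal{R}:\Gamma_U\subseteq\gamma_r\}$ for $U\in\mathcal{U}$. Initialize $\Psi(u)=\mathcal{R}$ for all $u$; for each $U\in\mathcal{U}$ and each $u$ with $\inf_{u^*\in U}\|u^*-u\|<\epsilon$ set $\Psi(u)\leftarrow\Psi(u)\cap R_U$. If $\Psi(u)\neq\emptyset$ for all $u$, the construction produces exactly the links $\psi$ with $\psi(u)\in\Psi(u)$ for all $u$. *)

(* Defs.v *)
From HB Require Import structures.
From mathcomp Require Import all_boot all_order all_algebra.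
From mathcomp Require Import all_classical all_reals all_analysis.
Set Implicit Arguments. Unset Strict Implicit. Unset Printing Implicit Defensive.
Import Order.TTheory GRing.Theory Num.Theory.
Local Open Scope classical_set_scope.
Local Open Scope ring_scope.

Section Defs.
Variables (R : realType) (Y : finType).

Definition simplex : set (Y -> R) :=
  [set p | (forall y, 0 <= p y) /\ \sum_(y : Y) p y = 1].

Definition exp_loss (Rep : Type) (L : Rep -> Y -> R) (p : Y -> R) (r : Rep) : R :=
  \sum_(y : Y) p y * L r y.

Definition prop (Rep : Type) (L : Rep -> Y -> R) (p : Y -> R) : set Rep :=
  [set r | forall r', exp_loss L p r <= exp_loss L p r'].

Definition level_set (Rep : Type) (gamma : (Y -> R) -> set Rep) (r : Rep)
  : set (Y -> R) := [set p | simplex p /\ gamma p r].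

(* Discrete loss: finite report set (a finType) and values in R^Y_+. *)
Definition discrete_loss (Rep : finType) (l : Rep -> Y -> R) : Prop :=
  forall r y, 0 <= l r y.

Definition affine (d : nat) (ab : 'rV[R]_d * R) (u : 'rV[R]_d) : R :=
  \sum_(i < d) ab.1 0 i * u 0 i + ab.2.

Definition polyhedral (d : nat) (L : 'rV[R]_d -> Y -> R) : Prop :=
  (forall u y, 0 <= L u y) /\
  forall y, exists s : seq ('rV[R]_d * R), s != [::] /\
    forall u, (forall ab, ab \in s -> affine ab u <= L u y) /\
              (exists2 ab, ab \in s & affine ab u = L u y).

Definition is_norm (d : nat) (nrm : 'rV[R]_d -> R) : Prop :=
  (forall u, 0 <= nrm u) /\ (forall u, nrm u = 0 -> u = 0) /\
  (forall (c : R) u, nrm (c *: u) = `|c| * nrm u) /\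
  (forall u v, nrm (u + v) <= nrm u + nrm v).

Definition indirectly_elicits (d : nat) (L : 'rV[R]_d -> Y -> R)
  (Rep : Type) (gamma : (Y -> R) -> set Rep) : Prop :=
  forall u, exists r, level_set (prop L) u `<=` level_set gamma r.

(* Calibration of (L, psi) w.r.t. l. Infima are taken in the extended reals
   (the infimum over the empty set is +oo). *)
Definition calibrated (d : nat) (L : 'rV[R]_d -> Y -> R) (Rep : Type)
  (l : Rep -> Y -> R) (psi : 'rV[R]_d -> Rep) : Prop :=
  forall p, simplex p ->
    (ereal_inf [set (exp_loss L p u)%:E | u in [set u | ~ prop l p (psi u)]]
     > ereal_inf [set (exp_loss L p u)%:E | u in [set: 'rV[R]_d]])%E.

Section Construction.
Variables (d : nat) (L : 'rV[R]_d -> Y -> R) (Rep : Type)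
  (gamma : (Y -> R) -> set Rep) (eps : R) (nrm : 'rV[R]_d -> R).

Definition Gam (p : Y -> R) : set 'rV[R]_d := prop L p.
Definition Ucal : set (set 'rV[R]_d) := [set Gam p | p in simplex].
Definition Gam_U (U : set 'rV[R]_d) : set (Y -> R) :=
  [set p | simplex p /\ Gam p = U].
Definition R_U (U : set 'rV[R]_d) : set Rep :=
  [set r | Gam_U U `<=` level_set gamma r].
Definition Psi (u : 'rV[R]_d) : set Rep :=
  [set r | forall U, Ucal U ->
     (ereal_inf [set (nrm (ustar - u))%:E | ustar in U] < eps%:E)%E ->
     R_U U r].

(* psi is produced by the construction (which presupposes that gamma is
   indirectly elicited by L): psi(u) ∈ Ψ(u) for all u (this forces Ψ(u) ≠ ∅). *)
Definition thickened_link (psi : 'rV[R]_d -> Rep) : Prop :=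
  indirectly_elicits L gamma /\ (forall u, Psi u (psi u)).
End Construction.

End Defs.

(* Main.v *)
Require Import Defs.
From HB Require Import structures.
From mathcomp Require Import all_boot all_order all_algebra.
From mathcomp Require Import all_classical all_reals all_analysis.
From mathcomp Require Import lra zify.
From Stdlib Require Import Lia.
Import Order.TTheory GRing.Theory Num.Theory.
Import numFieldNormedType.Exports.
Local Open Scope classical_set_scope.
Local Open Scope ring_scope.
Set Implicit Arguments. Unset Strict Implicit. Unset Printing Implicit Defensive.

Section Helpers.
Variable R : realType.

Lemma fin_pos_min (T : finType) (f : T -> R) :
  (forall t, 0 < f t) -> exists2 e : R, 0 < e & forall t, e <= f t.
Proof.
move=> fp.
suff [e e0 He] : exists2 e : R, 0 < e & forall t, t \in enum T -> e <= f t.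
  by exists e => // t; apply: He; rewrite mem_enum.
elim: (enum T) => [|x s [e e0 He]]; first by exists 1.
exists (Order.min (f x) e); first by rewrite lt_min fp e0.
move=> t; rewrite inE => /orP[/eqP->|ts]; first by rewrite ge_min lexx.
by rewrite ge_min He ?orbT.
Qed.

Lemma fin_argmin (T : finType) (P : pred T) (f : T -> R) (x0 : T) :
  P x0 -> exists2 x, P x & forall y, P y -> f x <= f y.
Proof.
move=> Px0; case: (arg_minP f Px0) => x Px Hx; by exists x.
Qed.

Definition dot d (a u : 'rV[R]_d) : R := \sum_(i < d) a 0 i * u 0 i.

Lemma affineE d (ab : 'rV[R]_d * R) u : affine ab u = dot ab.1 u + ab.2.
Proof. by []. Qed.

Lemma dotD d (a u v : 'rV[R]_d) : dot a (u + v) = dot a u + dot a v.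
Proof. by rewrite /dot -big_split; apply: eq_bigr => i _; rewrite mxE mulrDr. Qed.

Lemma dotZ d (a u : 'rV[R]_d) c : dot a (c *: u) = c * dot a u.
Proof. by rewrite /dot mulr_sumr; apply: eq_bigr => i _; rewrite mxE mulrCA. Qed.

Lemma dotN d (a u : 'rV[R]_d) : dot a (- u) = - dot a u.
Proof. by rewrite -scaleN1r dotZ mulN1r. Qed.

Lemma dotB d (a u v : 'rV[R]_d) : dot a (u - v) = dot a u - dot a v.
Proof. by rewrite dotD dotN. Qed.

Lemma dotDl d (a b u : 'rV[R]_d) : dot (a + b) u = dot a u + dot b u.
Proof. by rewrite /dot -big_split; apply: eq_bigr => i _; rewrite mxE mulrDl. Qed.

Lemma dotZl d (a u : 'rV[R]_d) c : dot (c *: a) u = c * dot a u.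
Proof. by rewrite /dot mulr_sumr; apply: eq_bigr => i _; rewrite mxE mulrA. Qed.

Lemma dot_suml d (I : finType) (a : I -> 'rV[R]_d) u :
  dot (\sum_i a i) u = \sum_i dot (a i) u.
Proof.
rewrite /dot exchange_big /=; apply: eq_bigr => i _.
by rewrite summxE mulr_suml.
Qed.

Lemma affine_add d (ab : 'rV[R]_d * R) u v :
  affine ab (u + v) = affine ab u + dot ab.1 v.
Proof. by rewrite !affineE dotD addrAC. Qed.

Lemma entry_le_norm d (x : 'rV[R]_d) i : `|x 0 i| <= `|x|.
Proof.
have /mapP[j Hj ->] : `|x 0 i| \in [seq `|x k.1 k.2| | k : 'I_1 * 'I_d].
  by apply/mapP; exists (ord0, i) => //=; rewrite mem_enum.
rewrite (_ : `|x| = mx_norm x) // mx_normrE; apply/bigmax_geP; right => /=; exists j => //.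
Qed.

Definition l1 d (a : 'rV[R]_d) : R := \sum_i `|a 0 i|.

Lemma dot_le d (a x : 'rV[R]_d) : `|dot a x| <= l1 a * `|x|.
Proof.
rewrite /dot /l1 mulr_suml; apply: le_trans (ler_norm_sum _ _ _) _.
apply: ler_sum => i _; rewrite normrM ler_wpM2l //; exact: entry_le_norm.
Qed.

Lemma l1_ge0 d (a : 'rV[R]_d) : 0 <= l1 a.
Proof. by apply: sumr_ge0 => i _. Qed.

End Helpers.

Section MaxAff.
Variables (R : realType) (d : nat) (K : finType) (ab : K -> 'rV[R]_d * R)
  (F : 'rV[R]_d -> R).
Hypotheses (Fge : forall k u, affine (ab k) u <= F u)
  (Fex : forall u, exists k, affine (ab k) u = F u)
  (F0 : forall u, 0 <= F u).

Local Notation a k := (ab k).1.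

Definition act u : {set K} := [set k | affine (ab k) u == F u].

Lemma in_act u k : (k \in act u) = (affine (ab k) u == F u).
Proof. by rewrite inE. Qed.

Lemma descent_step u w k0 : k0 \in act u ->
  (forall k, k \in act u -> dot (a k) w = dot (a k0) w) ->
  dot (a k0) w < 0 -> exists u', F u' <= F u /\ act u \proper act u'.
Proof.
move=> k0A Heq rlt; set r := dot (a k0) w in Heq rlt.
have Fk0 : affine (ab k0) u = F u by apply/eqP; rewrite -in_act.
have [[j Pj]|NP] := pselect (exists j, r < dot (a j) w); last first.
  exfalso.
  have Hle : forall j, dot (a j) w <= r.
    by move=> j; rewrite leNgt; apply/negP => H; apply: NP; exists j.
  pose t := (F u + 1) / (- r).
  have t0 : 0 < t by rewrite divr_gt0 ?oppr_gt0 // ltr_pwDr // F0.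
  have [k Hk] := Fex (u + t *: w).
  have := F0 (u + t *: w); rewrite -Hk affine_add dotZ.
  have : affine (ab k) u + t * dot (a k) w <= F u + t * r.
    by apply: lerD; [exact: Fge | rewrite ler_wpM2l // ltW].
  have -> : F u + t * r = -1.
    rewrite /t -mulrA invrN mulNr mulVf ?lt_eqF // mulrN1 opprD addrA subrr add0r //.
  move=> H1 H2; have := le_trans H2 H1; rewrite leNgt; by rewrite ltrN10.
pose P := fun j => r < dot (a j) w.
pose f := fun j => (F u - affine (ab j) u) / (dot (a j) w - r).
have [js Pjs Hjs] := @fin_argmin _ _ (fun j => `[< P j >]) f j (asboolT Pj).
move/asboolP: Pjs => Pjs.
set t := f js.
have dpos : forall j, P j -> 0 < dot (a j) w - r by move=> jj; rewrite subr_gt0.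
have t0 : 0 <= t by rewrite /t /f divr_ge0 ?subr_ge0 ?Fge // ltW // dpos.
have Fu' : F (u + t *: w) = F u + t * r.
  apply/eqP; rewrite eq_le; apply/andP; split; last first.
    by rewrite -Fk0 /r -dotZ -affine_add Fge.
  have [k <-] := Fex (u + t *: w); rewrite affine_add dotZ.
  have [Pk|NPk] := pselect (P k).
    have := Hjs k (asboolT Pk); rewrite -/t /f ler_pdivlMr ?dpos //.
    rewrite mulrBr => H; lra.
  have : dot (a k) w <= r by rewrite leNgt; apply/negP.
  move=> H; apply: lerD; first exact: Fge.
  by rewrite ler_wpM2l.
exists (u + t *: w); split.
  by rewrite Fu' gerDl mulr_ge0_le0 // ltW.
apply/properP; split.
  apply/fintype.subsetP => k kA; rewrite in_act affine_add dotZ Heq // Fu'.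
  by move: kA; rewrite in_act => /eqP ->.
exists js.
  have Ht : t * (dot (a js) w - r) = F u - affine (ab js) u.
    by rewrite /t /f divfK // gt_eqF // dpos.
  rewrite mulrBr in Ht.
  rewrite in_act affine_add dotZ Fu'; apply/eqP; lra.
rewrite in_act; apply/negP => /eqP Hjs'.
have : js \in act u by rewrite in_act Hjs'.
move=> /Heq; move: Pjs; rewrite /P => + E; by rewrite E ltxx.
Qed.


Definition flat (A : {set K}) := forall w k0, k0 \in A ->
  (forall k, k \in A -> dot (a k) w = dot (a k0) w) -> 0 <= dot (a k0) w.

Lemma act_nonempty u : exists k, k \in act u.
Proof. by have [k Hk] := Fex u; exists k; rewrite in_act Hk. Qed.

Lemma reach u : exists u', F u' <= F u /\ flat (act u').
Proof.
move: {2}(#|K| - #|act u|)%N (leqnn (#|K| - #|act u|)) => n.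
elim: n u => [|n IH] u Hn.
  have [Hf|Hnf] := pselect (flat (act u)); first by exists u.
  exfalso; move: Hnf => /existsNP[w /existsNP[k0 /not_implyP[k0A /not_implyP[Heq /negP]]]].
  rewrite -ltNge => Hlt.
  have [u1 [_ Hp]] := descent_step k0A Heq Hlt.
  have := proper_card Hp; have := max_card (mem (act u1)).
  move: Hn; rewrite leqn0 subn_eq0 => H1 H2 H3.
  by have := leq_ltn_trans H1 (leq_trans H3 H2); rewrite ltnn.
have [Hf|Hnf] := pselect (flat (act u)); first by exists u.
move: Hnf => /existsNP[w /existsNP[k0 /not_implyP[k0A /not_implyP[Heq /negP]]]].
rewrite -ltNge => Hlt.
have [u1 [Fu1 Hp]] := descent_step k0A Heq Hlt.
have [u2 [Fu2 Hf2]] : exists u', F u' <= F u1 /\ flat (act u').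
  apply: IH; have := proper_card Hp; have := max_card (mem (act u1)).
  move=> H2 H3; lia.
by exists u2; split => //; apply: le_trans Fu2 Fu1.
Qed.

Lemma flat_const u v : act u = act v -> flat (act u) -> F u = F v.
Proof.
move=> Euv Hf; have [k kA] := act_nonempty u.
have kB : k \in act v by rewrite -Euv.
have Hd : forall k', k' \in act u -> dot (a k') (v - u) = F v - F u.
  move=> k' k'A; have k'B : k' \in act v by rewrite -Euv.
  move: k'A k'B; rewrite !in_act => /eqP <- /eqP <-.
  rewrite [affine _ v](_ : _ = affine (ab k') (u + (v - u))); last by rewrite addrC subrK.
  rewrite affine_add; lra.
have H1 := Hf (v - u) k kA (fun k' hk' => etrans (Hd k' hk') (esym (Hd k kA))).
have H2 := Hf (- (v - u)) k kA.
rewrite dotN oppr_ge0 in H2.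
have H3 : dot (a k) (v - u) <= 0.
  apply: H2 => k' hk'; by rewrite !dotN Hd // Hd.
have := Hd k kA; have -> : dot (a k) (v - u) = 0 by apply/eqP; rewrite eq_le H1 H3.
by move/eqP; rewrite eq_sym subr_eq0 => /eqP.
Qed.

Lemma exists_min : exists w0, forall u, F w0 <= F u.
Proof.
pose repf (A : {set K}) : 'rV[R]_d :=
  match pselect (exists u, act u = A) with
  | left h => projT1 (cid h) | right _ => 0 end.
have repfP : forall A, (exists u, act u = A) -> act (repf A) = A.
  move=> A h; rewrite /repf; case: pselect => // h'.
  by case: (cid h').
pose P (A : {set K}) : bool := `[< flat A /\ exists u, act u = A >].
have [u0 [_ Hu0]] := reach 0.
have P0 : P (act u0) by apply/asboolP; split => //; exists u0.
have [As /asboolP [HfA HeA] HAs] := fin_argmin (fun A => F (repf A)) P0.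
exists (repf As) => u.
have [u' [Fu' Hf']] := reach u.
have Pu' : P (act u') by apply/asboolP; split => //; exists u'.
apply: le_trans (HAs _ Pu') _.
have -> : F (repf (act u')) = F u'.
  apply: flat_const; first by rewrite repfP //; exists u'.
  by rewrite repfP //; exists u'.
exact: Fu'.
Qed.

End MaxAff.

Section Topo.
Variables (R : realType) (d : nat).
Implicit Types (x y : 'rV[R]_d).

Lemma lip_cont (f : 'rV[R]_d -> R) C : 0 <= C ->
  (forall x y, f x - f y <= C * `|x - y|) -> continuous f.
Proof.
move=> C0 Hf x; apply/cvgrPdist_lt => [|e e0]; first by apply: nbhs_filter.
have e1 : 0 < e / (C + 1) by rewrite divr_gt0 // ltr_wpDl.
have : \forall y \near x, `|x - y| < e / (C + 1).
  exact: (@cvgr_dist_lt _ _ _ (nbhs x) _ id x (@cvg_id _ (nbhs x))).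
apply: filterS => y Hy.
have H1 : `|f x - f y| <= C * `|x - y|.
  have := Hf y x; rewrite distrC => H2.
  rewrite ler_norml Hf andbT; lra.
apply: le_lt_trans H1 _.
have : C * `|x - y| <= C * (e / (C + 1)) by rewrite ler_wpM2l // ltW.
move=> H; apply: le_lt_trans H _.
rewrite mulrCA gtr_pMr // ltr_pdivrMr ?ltr_wpDl //; lra.
Qed.

Lemma bounded_by (A : set 'rV[R]_d) B : (forall x, A x -> `|x| <= B) ->
  bounded_set A.
Proof.
move=> HB; rewrite /bounded_near; exists B; split; first exact: num_real.
move=> M BM x Ax /=; apply: le_trans (HB x Ax) _; exact: ltW.
Qed.


Lemma closed_fun_le (g : 'rV[R]_d -> R) c : continuous g -> closed [set x | g x <= c].
Proof.
move=> gc; rewrite (_ : [set x | g x <= c] = g @^-1` [set y | y <= c]) //.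
by apply: preimage_closed; [move=> ? ?; exact: gc | exact: closed_le].
Qed.

Lemma closed_fun_ge (g : 'rV[R]_d -> R) c : continuous g -> closed [set x | c <= g x].
Proof.
move=> gc; rewrite (_ : [set x | c <= g x] = g @^-1` [set y | c <= y]) //.
by apply: preimage_closed; [move=> ? ?; exact: gc | exact: closed_ge].
Qed.

Lemma closed_fun_eq (g : 'rV[R]_d -> R) c : continuous g -> closed [set x | g x = c].
Proof.
move=> gc; rewrite (_ : [set x | g x = c] = g @^-1` [set y | y = c]) //.
by apply: preimage_closed; [move=> ? ?; exact: gc | exact: closed_eq].
Qed.

Lemma dist_cont (u : 'rV[R]_d) : continuous (fun w : 'rV[R]_d => `|u - w|).
Proof.
apply: (@lip_cont _ 1) => // x y; rewrite mul1r.
apply: le_trans (lerB_dist _ _) _.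
have -> : u - x - (u - y) = y - x.
  by rewrite addrC opprB addrA subrK.
by rewrite distrC.
Qed.

Lemma compact_pos_min (T : set 'rV[R]_d) (h : 'rV[R]_d -> R) B :
  closed T -> (forall x, T x -> `|x| <= B) -> continuous h ->
  (forall x, T x -> 0 < h x) -> exists2 c, 0 < c & forall x, T x -> c <= h x.
Proof.
move=> Tc TB hc hp.
have [[x0 Tx0]|T0] := pselect (T !=set0); last first.
  by exists 1 => // x Tx; exfalso; apply: T0; exists x.
have cT : compact T by apply: bounded_closed_compact => //; exact: bounded_by TB.
have [c cT' Hc] := EVT_min_rV (ex_intro _ x0 Tx0) cT (continuous_subspaceT hc).
have Tc' : T c by rewrite inE in cT'.
exists (h c); first exact: hp.
by move=> x Tx; apply: Hc; rewrite inE.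
Qed.

Lemma nearest (G : set 'rV[R]_d) u : closed G -> G !=set0 ->
  exists2 w, G w & forall w', G w' -> `|u - w| <= `|u - w'|.
Proof.
move=> Gc [w0 Gw0].
pose A := G `&` [set w | `|u - w| <= `|u - w0|].
have Ac : closed A by apply: closedI => //; apply: closed_fun_le; exact: dist_cont.
have AB : forall w, A w -> `|w| <= `|u| + `|u - w0|.
  move=> w [_ Hw]; apply: le_trans (_ : `|u| + `|u - w| <= _); last by rewrite lerD2l.
  by apply: le_trans (ler_normB _ _); rewrite opprB addrC subrK.
have cA : compact A by apply: bounded_closed_compact => //; exact: bounded_by AB.
have A0 : A !=set0 by exists w0; rewrite /A /=; split.
have [w wA Hw] := EVT_min_rV A0 cA (continuous_subspaceT (@dist_cont u)).
rewrite inE in wA; case: wA => Gw Hw0.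
exists w => // w' Gw'.
have [H|H] := leP (`|u - w'|) (`|u - w0|).
  by apply: Hw; rewrite inE; split.
by apply: le_trans Hw0 (ltW H).
Qed.

End Topo.

Lemma max0_lip (R : realType) (p q : R) : Num.max 0 p - Num.max 0 q <= `|p - q|.
Proof.
have := ler_norm (p - q); have := ler_norm (q - p); rewrite distrC.
have [hp|hp] := leP 0 p; have [hq|hq] := leP 0 q;
  rewrite ?(max_r hp) ?(max_r hq) ?(max_l (ltW hp)) ?(max_l (ltW hq)); lra.
Qed.

Section Sharp.
Variables (R : realType) (d : nat) (K : finType) (ab : K -> 'rV[R]_d * R)
  (F : 'rV[R]_d -> R).
Hypotheses (Fge : forall k u, affine (ab k) u <= F u)
  (Fex : forall u, exists k, affine (ab k) u = F u)
  (F0 : forall u, 0 <= F u).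

Local Notation a k := (ab k).1.

Definition Cl := \sum_k l1 (a k).

Lemma Cl_ge0 : 0 <= Cl.
Proof. by apply: sumr_ge0 => k _; exact: l1_ge0. Qed.

Lemma l1_le_Cl k : l1 (a k) <= Cl.
Proof.
rewrite /Cl (bigD1 k) //= lerDl; apply: sumr_ge0 => j _; exact: l1_ge0.
Qed.

Lemma dot_le_Cl k (x : 'rV[R]_d) : `|dot (a k) x| <= Cl * `|x|.
Proof.
apply: le_trans (dot_le _ _) _; apply: ler_wpM2r => //; exact: l1_le_Cl.
Qed.

Lemma F_lip x y : F x - F y <= Cl * `|x - y|.
Proof.
have [k Hk] := Fex x.
have H1 : affine (ab k) x - affine (ab k) y = dot (a k) (x - y).
  rewrite [affine _ x](_ : _ = affine (ab k) (y + (x - y))); last by rewrite addrC subrK.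
  by rewrite affine_add addrAC subrr add0r.
have H2 := Fge k y; have H3 := ler_norm (dot (a k) (x - y)).
have H4 := dot_le_Cl k (x - y); lra.
Qed.

Lemma F_cont : continuous F.
Proof. exact: (lip_cont Cl_ge0 F_lip). Qed.

Variables (m : R) (w0 : 'rV[R]_d).
Hypotheses (Fw0 : F w0 = m) (Fmin : forall u, m <= F u).

Definition hA (A : {set K}) (e : 'rV[R]_d) := \sum_(k in A) Num.max 0 (dot (a k) e).
Definition ZA (A : {set K}) := [set z : 'rV[R]_d | forall k, k \in A -> dot (a k) z <= 0].
Definition TA (A : {set K}) :=
  [set e : 'rV[R]_d | `|e| = 1 /\ forall z, ZA A z -> 1 <= `|z - e|].

Lemma hA_cont A : continuous (hA A).
Proof.
apply: (@lip_cont _ _ _ (#|K|%:R * Cl)); first by rewrite mulr_ge0 // Cl_ge0.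
move=> x y; rewrite /hA -sumrB.
apply: le_trans (_ : \sum_(k in A) Cl * `|x - y| <= _).
  apply: ler_sum => k _; apply: le_trans (max0_lip _ _) _.
  by rewrite -dotB; exact: dot_le_Cl.
rewrite sumr_const -(mulr_natl (Cl * _)) mulrA ler_wpM2r // ler_wpM2r ?Cl_ge0 //.
by rewrite ler_nat max_card.
Qed.

Lemma TA_closed A : closed (TA A).
Proof.
rewrite (_ : TA A = [set e | `|e| = 1] `&` \bigcap_(z in ZA A) [set e | 1 <= `|z - e|]).
  apply: closedI; first by apply: closed_fun_eq; exact: norm_continuous.
  by apply: closed_bigI => z _; apply: closed_fun_ge; exact: dist_cont.
by apply/seteqP; split => e /= [H1 H2]; split => // z Hz; apply: H2.
Qed.

Lemma hA_pos A e : TA A e -> 0 < hA A e.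
Proof.
move=> [e1 He].
have [Hz|Hnz] := pselect (ZA A e).
  by have := He e Hz; rewrite subrr normr0 ler10.
have [k /not_implyP [kA /negP]] : exists k, ~ (k \in A -> dot (a k) e <= 0).
  by apply/existsNP => H; apply: Hnz => k; exact: H.
rewrite -ltNge => Hk.
rewrite /hA (bigD1 k) //=; apply: lt_le_trans (_ : Num.max 0 (dot (a k) e) <= _).
  by rewrite lt_max Hk orbT.
by rewrite lerDl; apply: sumr_ge0 => j _; rewrite le_max lexx.
Qed.

Lemma sharp : exists2 c, 0 < c & forall u, exists w, F w = m /\ c * `|u - w| <= F u - m.
Proof.
have /choice [cf Hcf] : forall A, exists c, 0 < c /\ forall e, TA A e -> c <= hA A e.
  move=> A; have TB : forall e, TA A e -> `|e| <= 1 by move=> e [-> _].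
  have [c c0 Hc] := compact_pos_min (@TA_closed A) TB (@hA_cont A) (@hA_pos A).
  by exists c.
have [c0 c00 Hc0] := fin_pos_min (fun A => proj1 (Hcf A)).
have Kpos : 0 < #|K|%:R + 1 :> R by rewrite ltr_wpDl.
exists (c0 / (#|K|%:R + 1)); first by rewrite divr_gt0.
move=> u.
have Gc : closed [set w | F w = m] by apply: closed_fun_eq; exact: F_cont.
have [w /= Fw Hw] := nearest u Gc (ex_intro _ w0 Fw0).
exists w; split => //.
set e := u - w; set A := act ab F w.
have KL : forall z, ZA A z -> `|e| <= `|e - z|.
  move=> z Hz.
  pose f := fun k => if k \in A then 1 else (m - affine (ab k) w) / (`|dot (a k) z| + 1).
  have fpos : forall k, 0 < f k.
    move=> k; rewrite /f; case: ifP => // kA.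
    apply: divr_gt0; last by rewrite ltr_wpDl.
    rewrite subr_gt0 -Fw lt_neqAle Fge andbT.
    by apply/negP => /eqP H; move: kA; rewrite in_act H eqxx.
  have [dl dl0 Hdl] := fin_pos_min fpos.
  set t := Num.min 1 dl.
  have t0 : 0 < t by rewrite lt_min ltr01 dl0.
  have t1 : t <= 1 by rewrite ge_min lexx.
  have Fwt : F (w + t *: z) = m.
    apply/eqP; rewrite eq_le Fmin andbT.
    have [k <-] := Fex (w + t *: z); rewrite affine_add dotZ.
    have [kA|kA] := boolP (k \in A).
      move: (kA); rewrite in_act Fw => /eqP ->.
      by rewrite gerDl; apply: mulr_ge0_le0; [exact: ltW | exact: Hz].
    have : t <= f k by apply: le_trans (Hdl k); rewrite ge_min lexx orbT.
    rewrite /f (negbTE kA) ler_pdivlMr ?ltr_wpDl // mulrDr mulr1 => H.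
    have : t * dot (a k) z <= t * `|dot (a k) z|.
      by apply: ler_wpM2l; [exact: ltW | exact: ler_norm].
    lra.
  have := Hw _ Fwt.
  have -> : u - (w + t *: z) = (1 - t) *: e + t *: (e - z).
    have Hid : forall (e' z' : 'rV[R]_d), (1 - t) *: e' + t *: (e' - z') = e' - t *: z'.
      by move=> e' z'; rewrite scalerBl scale1r scalerBr addrA subrK.
    by rewrite Hid /e opprD addrA.
  move=> H; have := le_trans H (ler_normD _ _).
  rewrite !normrZ !ger0_norm ?subr_ge0 ?(ltW t0) //.
  rewrite -/e mulrBl mul1r => H'.
  have : t * `|e| <= t * `|e - z| by lra.
  by rewrite ler_pM2l.
have [e0|en0] := eqVneq e 0.
  by rewrite -/e e0 normr0 mulr0 subr_ge0.
set n := `|e|.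
have n0 : 0 < n by rewrite normr_gt0.
have Te : TA A (n^-1 *: e).
  split; first by rewrite normrZ ger0_norm ?invr_ge0 ?ltW // mulVf ?gt_eqF.
  move=> z Hz.
  have Hz' : ZA A (n *: z).
    by move=> k kA; rewrite dotZ; apply: mulr_ge0_le0; [exact: ltW | exact: Hz].
  have := KL _ Hz'.
  rewrite (_ : z - n^-1 *: e = n^-1 *: (n *: z - e)); last first.
    have Hid : forall (e' z' : 'rV[R]_d), z' - n^-1 *: e' = n^-1 *: (n *: z' - e').
      by move=> e' z'; rewrite scalerBr scalerA mulVf ?gt_eqF // scale1r.
    exact: Hid.
  rewrite normrZ ger0_norm; last by rewrite invr_ge0 ltW.
  by move=> H; rewrite distrC ler_pdivlMl // mulr1.
have H1 : c0 <= n^-1 * hA A e.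
  apply: le_trans (Hc0 A) _; apply: le_trans (proj2 (Hcf A) _ Te) _.
  rewrite /hA mulr_sumr; apply: ler_sum => k _.
  by rewrite dotZ -{1}(mulr0 n^-1) maxr_pMr // invr_ge0 ltW.
have H2 : hA A e <= (#|K|%:R + 1) * (F u - m).
  apply: le_trans (_ : \sum_(k in A) (F u - m) <= _).
    apply: ler_sum => k kA; rewrite ge_max subr_ge0 Fmin andTb.
    have : affine (ab k) w = m by move: kA; rewrite in_act Fw => /eqP.
    have : affine (ab k) u = affine (ab k) w + dot (a k) e.
      by rewrite -affine_add /e addrC subrK.
    have := Fge k u; lra.
  rewrite sumr_const -(mulr_natl (F u - m)) ler_wpM2r ?subr_ge0 //.
  apply: le_trans (_ : #|K|%:R <= _); first by rewrite ler_nat max_card.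
  by rewrite lerDl.
have H3 : c0 * n <= hA A e.
  by have := ler_wpM2r (ltW n0) H1; rewrite mulrAC mulVf ?gt_eqF // mul1r.
rewrite mulrAC ler_pdivrMr //; lra.
Qed.

End Sharp.

Section Norms.
Variables (R : realType) (d : nat) (nrm : 'rV[R]_d -> R).
Hypothesis Hn : is_norm nrm.

Lemma nrm0 : nrm 0 = 0.
Proof.
case: Hn => _ [_ [HZ _]].
by have := HZ 0 0; rewrite scale0r normr0 mul0r.
Qed.

Lemma nrmD x y : nrm (x + y) <= nrm x + nrm y.
Proof. by case: Hn => _ [_ [_ HD]]. Qed.

Lemma nrmZ c x : nrm (c *: x) = `|c| * nrm x.
Proof. by case: Hn => _ [_ [HZ _]]. Qed.

Lemma nrm_ge0 x : 0 <= nrm x.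
Proof. by case: Hn. Qed.

Lemma nrmN x : nrm (- x) = nrm x.
Proof. by rewrite -scaleN1r nrmZ normrN1 mul1r. Qed.

Lemma nrmC x y : nrm (x - y) = nrm (y - x).
Proof. by rewrite -nrmN opprB. Qed.

Lemma nrm_sum (I : Type) (r : seq I) (f : I -> 'rV[R]_d) :
  nrm (\sum_(i <- r) f i) <= \sum_(i <- r) nrm (f i).
Proof.
elim: r => [|i r IH]; first by rewrite !big_nil nrm0.
rewrite !big_cons; apply: le_trans (nrmD _ _) _; exact: lerD.
Qed.

Definition C1 := \sum_(j < d) nrm (delta_mx 0 j).

Lemma C1_ge0 : 0 <= C1.
Proof. by apply: sumr_ge0 => j _; exact: nrm_ge0. Qed.

Lemma NE1 x : nrm x <= C1 * `|x|.
Proof.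
rewrite {1}(row_sum_delta x); apply: le_trans (nrm_sum _ _) _.
rewrite /C1 mulr_suml; apply: ler_sum => j _; rewrite nrmZ mulrC.
by apply: ler_wpM2l; [exact: nrm_ge0 | exact: entry_le_norm].
Qed.

Lemma nrm_lip x y : nrm x - nrm y <= C1 * `|x - y|.
Proof.
have : nrm x <= nrm (x - y) + nrm y by rewrite -{1}(subrK y x) nrmD.
have := NE1 (x - y); lra.
Qed.

Lemma NE2 : exists2 C, 0 < C & forall x, `|x| <= C * nrm x.
Proof.
have Sc : closed [set x : 'rV[R]_d | `|x| = 1].
  by apply: closed_fun_eq; exact: norm_continuous.
have SB : forall x : 'rV[R]_d, [set x | `|x| = 1] x -> `|x| <= 1 by move=> x /= ->.
have Sp : forall x : 'rV[R]_d, [set x | `|x| = 1] x -> 0 < nrm x.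
  move=> x /= x1; rewrite lt_neqAle nrm_ge0 andbT; apply/negP => /eqP H.
  case: Hn => _ [H0 _]; have := H0 x (esym H) => x0.
  by move: x1; rewrite x0 normr0 => /eqP; rewrite eq_sym oner_eq0.
have [c c0 Hc] := compact_pos_min Sc SB (lip_cont C1_ge0 nrm_lip) Sp.
exists c^-1; first by rewrite invr_gt0.
move=> x; have [->|xn0] := eqVneq x 0; first by rewrite normr0 nrm0 mulr0.
have nx : 0 < `|x| by rewrite normr_gt0.
have nx1 : `| `|x|^-1 *: x| = 1.
  by rewrite normrZ ger0_norm ?invr_ge0 ?ltW // mulVf ?gt_eqF.
have := Hc (`|x|^-1 *: x) nx1.
rewrite nrmZ ger0_norm; last by rewrite invr_ge0 ltW.
move=> H.
have := ler_wpM2r (ltW nx) H; rewrite mulrAC mulVf ?gt_eqF // mul1r => H'.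
rewrite [X in X <= _](_ : _ = c^-1 * (c * `|x|)); last first.
  by rewrite mulrA mulVf ?gt_eqF // mul1r.
by apply: ler_wpM2l => //; rewrite invr_ge0 ltW.
Qed.

End Norms.

Lemma poly_pieces (R : realType) (Y : finType) (d : nat) (L : 'rV[R]_d -> Y -> R) :
  polyhedral L -> exists N (piece : Y -> 'I_N -> 'rV[R]_d * R),
    (forall y i u, affine (piece y i) u <= L u y) /\
    (forall y u, exists i, affine (piece y i) u = L u y).
Proof.
move=> [_ H]; have /choice [s Hs] := H.
pose N := (\max_y size (s y))%N.
pose piece y (i : 'I_N) := nth (head (0, 0) (s y)) (s y) i.
have inS : forall y i, piece y i \in s y.
  move=> y i; rewrite /piece; case: (Hs y) => sn0 _.
  have [lt|ge] := ltnP i (size (s y)); first exact: mem_nth.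
  rewrite nth_default //; case: (s y) sn0 => // x t _; exact: mem_head.
exists N, piece; split.
  by move=> y i u; case: (Hs y) => _ /(_ u) [+ _]; apply; exact: inS.
move=> y u; case: (Hs y) => _ /(_ u) [_ [ab abin Hab]].
have iN : (index ab (s y) < N)%N.
  apply: leq_trans (_ : size (s y) <= N)%N; first by rewrite index_mem.
  exact: (@leq_bigmax _ (fun y => size (s y)) y).
exists (Ordinal iN); by rewrite /piece /= nth_index.
Qed.

Section Poly.
Variables (R : realType) (Y : finType) (d : nat) (L : 'rV[R]_d -> Y -> R).
Variables (N : nat) (piece : Y -> 'I_N -> 'rV[R]_d * R).
Hypotheses (Pge : forall y i u, affine (piece y i) u <= L u y)
  (Pex : forall y u, exists i, affine (piece y i) u = L u y)
  (L0 : forall u y, 0 <= L u y).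

Definition abp (p : Y -> R) (s : {ffun Y -> 'I_N}) : 'rV[R]_d * R :=
  (\sum_y p y *: (piece y (s y)).1, \sum_y p y * (piece y (s y)).2).

Lemma abpE p s u : affine (abp p s) u = \sum_y p y * affine (piece y (s y)) u.
Proof.
rewrite affineE /abp /= dot_suml -big_split /=; apply: eq_bigr => y _.
by rewrite dotZl affineE mulrDr.
Qed.

Lemma Fp_ge p : (forall y, 0 <= p y) -> forall s u, affine (abp p s) u <= exp_loss L p u.
Proof.
move=> p0 s u; rewrite abpE /exp_loss; apply: ler_sum => y _.
by apply: ler_wpM2l.
Qed.

Lemma Fp_ex p u : exists s, affine (abp p s) u = exp_loss L p u.
Proof.
have /choice [f Hf] : forall y, exists i, affine (piece y i) u = L u y by move=> y; exact: Pex.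
exists [ffun y => f y]; rewrite abpE /exp_loss; apply: eq_bigr => y _.
by rewrite ffunE Hf.
Qed.

Lemma Fp_0 p : (forall y, 0 <= p y) -> forall u, 0 <= exp_loss L p u.
Proof. by move=> p0 u; apply: sumr_ge0 => y _; rewrite mulr_ge0. Qed.

Definition pat u : {ffun Y -> {set 'I_N}} :=
  [ffun y => [set i | affine (piece y i) u == L u y]%SET].

Lemma in_pat u y i : (i \in pat u y) = (affine (piece y i) u == L u y).
Proof. by rewrite ffunE inE. Qed.

Lemma affine_diff (ab : 'rV[R]_d * R) u v t :
  affine ab (u + t *: (u - v)) = affine ab u + t * (affine ab u - affine ab v).
Proof.
rewrite affine_add dotZ dotB !affineE; congr (_ + _ * _); lra.
Qed.

Lemma pat_opt p u u' : (forall y, 0 <= p y) -> pat u = pat u' ->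
  prop L p u -> prop L p u'.
Proof.
move=> p0 Hpat Hu.
have /choice [iy Hiy] : forall y, exists i, affine (piece y i) u = L u y by move=> y; exact: Pex.
have iy' : forall y, affine (piece y (iy y)) u' = L u' y.
  move=> y; apply/eqP; rewrite -in_pat -Hpat in_pat Hiy //.
pose D (yj : Y * 'I_N) := let y := yj.1 in let j := yj.2 in
  affine (piece y j) u - affine (piece y (iy y)) u.
pose E (yj : Y * 'I_N) := let y := yj.1 in let j := yj.2 in
  (affine (piece y j) u - affine (piece y j) u') -
  (affine (piece y (iy y)) u - affine (piece y (iy y)) u').
have key : forall yj, exists2 dl, 0 < dl & forall t, 0 <= t <= dl -> D yj + t * E yj <= 0.
  case=> y j; rewrite /D /E /=.
  have [jA|jA] := boolP (j \in pat u y).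
    have jA' : j \in pat u' y by rewrite -Hpat.
    move: jA jA'; rewrite !in_pat => /eqP -> /eqP ->.
    by exists 1 => // t _; rewrite Hiy iy' !subrr mulr0 addr0.
  have Hlt : affine (piece y j) u < L u y.
    by rewrite lt_neqAle Pge andbT; move: jA; rewrite in_pat.
  set s := affine (piece y j) u - affine (piece y (iy y)) u.
  set r := (_ - _) - (_ - _).
  have s0 : s < 0 by rewrite /s Hiy subr_lt0.
  exists ((- s) / (`|r| + 1)); first by rewrite divr_gt0 ?oppr_gt0 // ltr_wpDl.
  move=> t /andP [t0 tle].
  move: tle; rewrite ler_pdivlMr ?ltr_wpDl // mulrDr mulr1 => tle.
  have : t * r <= t * `|r| by apply: ler_wpM2l => //; exact: ler_norm.
  lra.
have /choice [dl Hdl] : forall yj, exists dl, 0 < dl /\ forall t, 0 <= t <= dl -> D yj + t * E yj <= 0.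
  by move=> yj; have [dl ? ?] := key yj; exists dl.
have [dm dm0 Hdm] := fin_pos_min (fun yj => proj1 (Hdl yj)).
set v := u + dm *: (u - u').
have Lv : forall y, L v y = L u y + dm * (L u y - L u' y).
  move=> y; apply/eqP; rewrite eq_le; apply/andP; split.
    have [k <-] := Pex y v; rewrite affine_diff.
    have := proj2 (Hdl (y, k)) dm; rewrite /D /E /= => H.
    have := H (introT andP (conj (ltW dm0) (Hdm (y, k)))).
    rewrite -Hiy -iy'; lra.
  by rewrite -Hiy -iy' -affine_diff Pge.
have Fv : exp_loss L p v = exp_loss L p u + dm * (exp_loss L p u - exp_loss L p u').
  rewrite /exp_loss -sumrB mulr_sumr -big_split /=; apply: eq_bigr => y _.
  rewrite Lv; lra.
move=> w; have := Hu v; have := Hu w; rewrite Fv => H1 H2.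
have : dm * (exp_loss L p u - exp_loss L p u') >= 0 by lra.
rewrite pmulr_rge0 // subr_ge0 => H3; lra.
Qed.

End Poly.

Section Einf.
Variable R : realType.

Lemma inf_ge (T : Type) (B : set T) (F : T -> R) x :
  (forall u, B u -> x <= F u) -> (x%:E <= ereal_inf [set (F u)%:E | u in B])%E.
Proof.
by move=> H; apply/ereal_infP => _ [u Bu <-]; rewrite lee_fin H.
Qed.

Lemma inf_le (T : Type) (B : set T) (F : T -> R) u :
  B u -> (ereal_inf [set (F u)%:E | u in B] <= (F u)%:E)%E.
Proof. by move=> Bu; apply: ereal_inf_lbound; exists u. Qed.

Lemma inf_min (T : Type) (F : T -> R) w : (forall u, F w <= F u) ->
  ereal_inf [set (F u)%:E | u in [set: T]] = (F w)%:E.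
Proof.
move=> H; apply/eqP; rewrite eq_le; apply/andP; split; first exact: inf_le.
exact: inf_ge.
Qed.

Lemma inf_gap (T : Type) (B : set T) (F : T -> R) x :
  (x%:E < ereal_inf [set (F u)%:E | u in B])%E ->
  exists2 g, 0 < g & forall u, B u -> x + g <= F u.
Proof.
case E: (ereal_inf _) => [b| |] H.
- exists (b - x); first by rewrite subr_gt0 -lte_fin.
  move=> u Bu; have := inf_le F Bu; rewrite E lee_fin; lra.
- exists 1 => // u Bu; have := inf_le F Bu; by rewrite E.
- by move: H; rewrite ltNge leNye.
Qed.

End Einf.

Theorem theorem9 (R : realType) (Y Rep : finType) (d : nat)
  (L : 'rV[R]_d -> Y -> R) (l : Rep -> Y -> R) (nrm : 'rV[R]_d -> R)
  (psi : 'rV[R]_d -> Rep) :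
  polyhedral L -> discrete_loss l -> is_norm nrm ->
  (calibrated L l psi <->
   exists eps : R, 0 < eps /\ thickened_link L (prop l) eps nrm psi).
Proof.
move=> HL Hl Hn.
have L0 := HL.1.
have [N [piece [Pge Pex]]] := poly_pieces HL.
have p0 : forall p : Y -> R, simplex p -> forall y, 0 <= p y.
  by move=> p [H _].
split.
-
  move=> Hcal.
  have IE : indirectly_elicits L (prop l).
    move=> u; exists (psi u) => p [sp Hpu]; split => //.
    apply: contrapT => Hnot.
    have := Hcal p sp; rewrite (inf_min Hpu).
    have := inf_le (exp_loss L p) (Hnot : [set u | ~ prop l p (psi u)] u).
    by move=> H1 H2; have := lt_le_trans H2 H1; rewrite ltxx.
  have [C2 C20 HC2] := NE2 Hn.
  pose code (U : set 'rV[R]_d) : {set {ffun Y -> {set 'I_N}}} :=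
    [set A | `[< exists2 u, U u & pat L piece u = A >]]%SET.
  have codeP : forall p U, simplex p -> U = Gam L p ->
      forall u, U u <-> (pat L piece u \in code U).
    move=> p U sp EU u; split => [Uu|]; first by rewrite inE; apply/asboolP; exists u.
    rewrite inE => /asboolP [u0 Uu0 Hp]; rewrite EU; rewrite EU in Uu0.
    exact: (pat_opt Pge Pex (p0 p sp) Hp Uu0).
  have code_inj : forall U1 U2, Ucal L U1 -> Ucal L U2 -> code U1 = code U2 -> U1 = U2.
    move=> U1 U2 [p1 sp1 E1] [p2 sp2 E2] Hc; apply/seteqP; split => u.
      by move=> /(codeP _ _ sp1 (esym E1)); rewrite Hc => /(codeP _ _ sp2 (esym E2)).
    by move=> /(codeP _ _ sp2 (esym E2)); rewrite -Hc => /(codeP _ _ sp1 (esym E1)).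
  have Hdel : forall cr : {set {ffun Y -> {set 'I_N}}} * Rep, exists dl, 0 < dl /\
      forall U, Ucal L U -> code U = cr.1 -> ~ R_U L (prop l) U cr.2 ->
      forall u us, U us -> nrm (us - u) < dl -> psi u <> cr.2.
    case=> cc r /=.
    have [[U0 [HU0 [Hc0 HnR]]]|Hno] :=
      pselect (exists U, Ucal L U /\ code U = cc /\ ~ R_U L (prop l) U r); last first.
      exists 1; split => // U HU Hc HnR; exfalso; apply: Hno; exists U; split => //.
    have [p [[sp Ep] Hnp]] : exists p, Gam_U L U0 p /\ ~ level_set (prop l) r p.
      apply: contrapT => H; apply: HnR => p Hp; apply: contrapT => Hn'; apply: H.
      by exists p; split.
    have Hnp' : ~ prop l p r by move=> H; apply: Hnp; split.
    have Fge := Fp_ge Pge (p0 p sp).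
    have Fex := Fp_ex Pex p.
    have F0 := Fp_0 L0 (p0 p sp).
    have [w0 Hw0] := exists_min Fge Fex F0.
    have := Hcal p sp; rewrite (inf_min Hw0) => /inf_gap [g g0 Hg].
    set K := Cl (abp piece p).
    have K0 : 0 <= K by exact: Cl_ge0.
    have KC0 : 0 < K * C2 + 1 by rewrite ltr_wpDl // mulr_ge0 // ltW.
    exists (g / (K * C2 + 1)); split; first by rewrite divr_gt0.
    move=> U HU Hc _ u us Uus Hnus Epsi.
    have EU : U = U0 by apply: code_inj => //; rewrite Hc Hc0.
    have Uus' : Gam L p us by rewrite Ep -EU.
    have Fus : exp_loss L p us <= exp_loss L p w0 by apply: Uus'.
    have Hlip := F_lip Fge Fex u us; rewrite -/K in Hlip.
    have H1 := HC2 (u - us).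
    have H2 : K * `|u - us| <= K * (C2 * nrm (us - u)).
      by apply: ler_wpM2l => //; rewrite -(nrmC Hn).
    have H3 : K * (C2 * nrm (us - u)) <= K * C2 * (g / (K * C2 + 1)).
      rewrite mulrA; apply: ler_wpM2l; [by rewrite mulr_ge0 // ltW | exact: ltW].
    have H4 : K * C2 * (g / (K * C2 + 1)) < g.
      rewrite mulrCA gtr_pMr // ltr_pdivrMr //; lra.
    have Hprop : prop l p (psi u).
      apply: contrapT => Hb; have := Hg u Hb; lra.
    by apply: Hnp'; rewrite -Epsi.
  have /choice [dl Hdl] := Hdel.
  have [eps e0 He] := fin_pos_min (fun cr => proj1 (Hdl cr)).
  exists eps; split => //; split => // u U HU Hinf.
  apply: contrapT => HnR.
  have [y [us Uus <-] Hy] := ereal_inf_lt Hinf.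
  rewrite lte_fin in Hy.
  apply: (proj2 (Hdl (code U, psi u)) U HU erefl HnR u us Uus) => //.
  exact: lt_le_trans Hy (He _).
-
  move=> [eps [e0 [_ HPsi]]] p sp.
  have Fge := Fp_ge Pge (p0 p sp).
  have Fex := Fp_ex Pex p.
  have F0 := Fp_0 L0 (p0 p sp).
  have [w0 Hw0] := exists_min Fge Fex F0.
  set m := exp_loss L p w0.
  have [c c0 Hc] := sharp Fge Fex (erefl m) Hw0.
  rewrite (inf_min Hw0) -/m.
  set C := C1 nrm.
  have C0 : 0 <= C := C1_ge0 Hn.
  have Hg : forall u, [set u | ~ prop l p (psi u)] u ->
      m + c * eps / (C + 1) <= exp_loss L p u.
    move=> u /= Hu; rewrite leNgt; apply/negP => Hlt.
    have [w [Fw Hcw]] := Hc u.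
    have Hw : nrm (w - u) < eps.
      apply: le_lt_trans (NE1 Hn (w - u)) _; rewrite -/C distrC.
      have H1 : c * `|u - w| < c * (eps / (C + 1)) by rewrite mulrA; lra.
      rewrite ltr_pM2l // in H1.
      apply: le_lt_trans (_ : C * (eps / (C + 1)) < _).
        by apply: ler_wpM2l => //; exact: ltW.
      by rewrite mulrCA gtr_pMr // ltr_pdivrMr ?ltr_wpDl //; lra.
    have Uc : Ucal L (Gam L p) by exists p.
    have HR := HPsi u (Gam L p) Uc.
    have : R_U L (prop l) (Gam L p) (psi u).
      apply: HR; apply: (le_lt_trans _ (_ : (nrm (w - u))%:E < eps%:E)%E).
        apply: ereal_inf_lbound; exists w => //.
        by move=> v; rewrite Fw; apply: Hw0.
      by rewrite lte_fin.
    by move=> /(_ p (conj sp erefl)) [_].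
  apply: (lt_le_trans _ (inf_ge Hg)).
  rewrite lte_fin ltrDl; apply: divr_gt0; [exact: mulr_gt0 | exact: ltr_wpDl].
Qed.
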